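(* Let $n\ge 1$ and let $\Psi:[0,1]^4\to\mathbb{R}_+$ be a performance metric that satisfies TP monotonicity (defined in the context). Then $\Psi$ satisfies the probability ranking principle: for any set $\mathbf{x}=\{x_1,\dots,x_n\}$ of instances and any conditional label distribution of the form $\mathbb{P}(\mathbf{y}\mid\mathbf{x})=\prod_{i=1}^n \eta_i^{y_i}(1-\eta_i)^{1-y_i}$ with $\eta_i=\mathbb{P}(Y=1\mid x_i)\in[0,1]$, every maximizer $\mathbf{s}^*\in\arg\max_{\mathbf{s}\in\{0,1\}^n}U_\Psi(\mathbf{s};\mathbb{P})$ satisfies \[\min\{\eta_i : s_i^*=1\}\ \ge\ \max\{\eta_i : s_i^*=0\}.\]
   Context: Labels are binary, $\mathcal{Y}=\{0,1\}$, and instance–label pairs are drawn i.i.d. from a distribution $\mathbb{P}$, so that given instances $\mathbf{x}$ the labels are conditionally independent with $\mathbb{P}(Y=1\mid x_i)=\eta_i$. For predictions $\mathbf{s}\in\{0,1\}^n$ and labels $\mathbf{y}\in\{0,1\}^n$ the empirical confusion matrix has entries $\widehat{TP}=\frac1n\sum_i s_iy_i$, $\widehat{TN}=\frac1n\sum_i(1-s_i)(1-y_i)$, $\widehat{FP}=\frac1n\sum_i s_i(1-y_i)$, $\widehat{FN}=\frac1n\sum_i(1-s_i)y_i$. A metric $\Psi:[0,1]^4\to\mathbb{R}_+$ is evaluated on these four entries, written $\Psi(\mathbf{s},\mathbf{y})$. The (decision-theoretic) utility is $U_\Psi(\mathbf{s};\mathbb{P})=\mathbb{E}_{\mathbf{y}\sim\mathbb{P}(\cdot\mid\mathbf{x})}\Psi(\mathbf{s},\mathbf{y})$.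 Writing $u=\widehat{TP}(\mathbf{s},\mathbf{y})$, $v=v(\mathbf{s})=\frac1n\sum_i s_i$, $p=p(\mathbf{y})=\frac1n\sum_i y_i$, the confusion matrix is determined by $(u,v,p)$ (namely $\widehat{FP}=v-u$, $\widehat{FN}=p-u$, $\widehat{TN}=1-v-p+u$), so there is a function $\Phi:[0,1]^3\to\mathbb{R}_+$ with $\Psi(\mathbf{s},\mathbf{y})=\Phi(\widehat{TP}(\mathbf{s},\mathbf{y}),v(\mathbf{s}),p(\mathbf{y}))$. $\Psi$ is called TP monotonic if whenever $u_1>u_2$ and $v,p$ are fixed, $\Phi(u_1,v,p)>\Phi(u_2,v,p)$. *)

(* Defs.v *)
From HB Require Import structures.
From mathcomp Require Import all_boot all_order all_algebra.
Set Implicit Arguments. Unset Strict Implicit. Unset Printing Implicit Defensive.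
Import Order.TTheory GRing.Theory Num.Theory.
Local Open Scope ring_scope.

Section Defs.
Variable R : realFieldType.

(* A metric Psi is a function of (TP, TN, FP, FN). *)
Definition metric := R -> R -> R -> R -> R.

Definition in01 (a : R) := 0 <= a <= 1.

Definition TPhat n (s y : {ffun 'I_n -> bool}) : R :=
  (n%:R)^-1 * \sum_(i < n) (s i && y i)%:R.
Definition TNhat n (s y : {ffun 'I_n -> bool}) : R :=
  (n%:R)^-1 * \sum_(i < n) (~~ s i && ~~ y i)%:R.
Definition FPhat n (s y : {ffun 'I_n -> bool}) : R :=
  (n%:R)^-1 * \sum_(i < n) (s i && ~~ y i)%:R.
Definition FNhat n (s y : {ffun 'I_n -> bool}) : R :=
  (n%:R)^-1 * \sum_(i < n) (~~ s i && y i)%:R.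

Definition Psi_eval (Psi : metric) n (s y : {ffun 'I_n -> bool}) : R :=
  Psi (TPhat s y) (TNhat s y) (FPhat s y) (FNhat s y).

Definition Phi (Psi : metric) (u v p : R) : R :=
  Psi u (1 - v - p + u) (v - u) (p - u).

Definition valid_uvp (u v p : R) : Prop :=
  [/\ in01 u, in01 (1 - v - p + u), in01 (v - u) & in01 (p - u)].

Definition TP_monotonic (Psi : metric) : Prop :=
  forall u1 u2 v p : R, in01 v -> in01 p ->
    valid_uvp u1 v p -> valid_uvp u2 v p ->
    u1 > u2 -> Phi Psi u1 v p > Phi Psi u2 v p.

Definition metric_nonneg (Psi : metric) : Prop :=
  forall a b c d : R, in01 a -> in01 b -> in01 c -> in01 d -> 0 <= Psi a b c d.

Definition label_prob n (eta : 'I_n -> R) (y : {ffun 'I_n -> bool}) : R :=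
  \prod_(i < n) (if y i then eta i else 1 - eta i).

Definition utility (Psi : metric) n (eta : 'I_n -> R) (s : {ffun 'I_n -> bool}) : R :=
  \sum_(y : {ffun 'I_n -> bool}) label_prob eta y * Psi_eval Psi s y.

End Defs.

(* Main.v *)
Require Import Defs.
From HB Require Import structures.
From mathcomp Require Import all_boot all_order all_algebra all_fingroup.
From mathcomp Require Import lra ring.
Set Implicit Arguments. Unset Strict Implicit. Unset Printing Implicit Defensive.
Import Order.TTheory GRing.Theory Num.Theory.
Local Open Scope ring_scope.

Definition vfrac (R : realFieldType) n (b : 'I_n -> bool) : R :=
  (n%:R)^-1 * \sum_(k < n) (b k)%:R.

Definition swp n (i j : 'I_n) (y : {ffun 'I_n -> bool}) : {ffun 'I_n -> bool} :=
  [ffun k => y (tperm i j k)].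

Lemma swpK n (i j : 'I_n) : involutive (swp i j).
Proof. by move=> y; apply/ffunP => k; rewrite !ffunE tpermK. Qed.

Lemma swp_inj n (i j : 'I_n) : injective (swp i j).
Proof. exact: inv_inj (swpK i j). Qed.

Lemma reindex_tperm (R : realFieldType) n (i j : 'I_n) (F : 'I_n -> R) :
  \sum_(k < n) F (tperm i j k) = \sum_(k < n) F k.
Proof. by rewrite [RHS](reindex_inj (@perm_inj _ (tperm i j))). Qed.

Lemma vfrac_in01 (R : realFieldType) n (b : 'I_n -> bool) :
  (0 < n)%N -> in01 (@vfrac R _ b).
Proof.
move=> n0; rewrite /in01 /vfrac.
have nR : (0 : R) < n%:R by rewrite ltr0n.
have S0 : (0 : R) <= \sum_(k < n) (b k)%:R by apply: sumr_ge0 => k _; rewrite ler0n.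
have S1 : \sum_(k < n) (b k)%:R <= (n%:R : R).
  have -> : (n%:R : R) = \sum_(k < n) 1 by rewrite sumr_const card_ord.
  by apply: ler_sum => k _; case: (b k).
apply/andP; split; first by rewrite mulr_ge0 // invr_ge0 ltW.
have Hi : (0:R) <= (n%:R)^-1 by rewrite invr_ge0 ltW.
have := ler_wpM2l Hi S1.
by rewrite mulVf // lt0r_neq0.
Qed.

Lemma Psi_Phi (R : realFieldType) n (Psi : metric R) (s y : {ffun 'I_n -> bool}) :
  (0 < n)%N ->
  Psi_eval Psi s y = Phi Psi (TPhat R s y) (@vfrac R _ s) (@vfrac R _ y) /\
  valid_uvp (TPhat R s y) (@vfrac R _ s) (@vfrac R _ y).
Proof.
move=> n0.
have nR : (n%:R : R) != 0 by rewrite pnatr_eq0 -lt0n.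
set S := \sum_(k < n) (s k)%:R : R.
set Y := \sum_(k < n) (y k)%:R : R.
set C := \sum_(k < n) (s k && y k)%:R : R.
have EFP : FPhat R s y = @vfrac R _ s - TPhat R s y.
  rewrite /FPhat /vfrac /TPhat -mulrBr -sumrB; congr (_ * _).
  by apply: eq_bigr => k _; case: (s k); case: (y k) => /=; lra.
have EFN : FNhat R s y = @vfrac R _ y - TPhat R s y.
  rewrite /FNhat /vfrac /TPhat -mulrBr -sumrB; congr (_ * _).
  by apply: eq_bigr => k _; case: (s k); case: (y k) => /=; lra.
have ETN : TNhat R s y = 1 - @vfrac R _ s - @vfrac R _ y + TPhat R s y.
  have E : \sum_(k < n) (~~ s k && ~~ y k)%:R = (n%:R : R) - S - Y + C.
    have -> : (n%:R : R) = \sum_(k < n) 1 by rewrite sumr_const card_ord.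
    rewrite /S /Y /C -!sumrB -big_split /=.
    by apply: eq_bigr => k _; case: (s k); case: (y k) => /=; lra.
  by rewrite /TNhat /vfrac /TPhat E -/S -/Y -/C !mulrDr !mulrN mulVf.
split; first by rewrite /Psi_eval /Phi EFP EFN ETN.
rewrite /valid_uvp -ETN -EFP -EFN; split.
- exact: (@vfrac_in01 R _ (fun k => s k && y k) n0).
- exact: (@vfrac_in01 R _ (fun k => ~~ s k && ~~ y k) n0).
- exact: (@vfrac_in01 R _ (fun k => s k && ~~ y k) n0).
- exact: (@vfrac_in01 R _ (fun k => ~~ s k && y k) n0).
Qed.

Definition Qp (R : realFieldType) n (eta : 'I_n -> R) (i j : 'I_n) (y : {ffun 'I_n -> bool}) : R :=
  \prod_(k < n | (k != i) && (k != j)) (if y k then eta k else 1 - eta k).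

Lemma P_split (R : realFieldType) n (eta : 'I_n -> R) (i j : 'I_n) y : i != j ->
  label_prob eta y = (if y i then eta i else 1 - eta i) *
    (if y j then eta j else 1 - eta j) * Qp eta i j y.
Proof.
move=> ij; rewrite /label_prob (bigD1 i) //= (bigD1 j) 1?eq_sym //= mulrA /Qp; congr (_ * _); apply: eq_bigl => k /=.
Qed.

Lemma Qp_swp (R : realFieldType) n (eta : 'I_n -> R) (i j : 'I_n) y :
  Qp eta i j (swp i j y) = Qp eta i j y.
Proof.
by apply: eq_bigr => k /andP[ki kj]; rewrite ffunE tpermD // eq_sym.
Qed.

Lemma Psi_eval_swap (R : realFieldType) n (Psi : metric R) (i j : 'I_n) s y :
  Psi_eval Psi (swp i j s) y = Psi_eval Psi s (swp i j y).
Proof.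
rewrite /Psi_eval /TPhat /TNhat /FPhat /FNhat.
congr (Psi (_ * _) (_ * _) (_ * _) (_ * _));
  rewrite -(reindex_tperm i j); apply: eq_bigr => k _; rewrite !ffunE tpermK //.
Qed.

Lemma Psi_strict (R : realFieldType) n (Psi : metric R) (i j : 'I_n) (s y : {ffun 'I_n -> bool}) :
  (0 < n)%N -> TP_monotonic Psi -> i != j ->
  s i -> ~~ s j -> y i -> ~~ y j ->
  Psi_eval Psi s (swp i j y) < Psi_eval Psi s y.
Proof.
move=> n0 mon ij si sj yi yj.
have [E1 V1] := Psi_Phi Psi s y n0.
have [E2 V2] := Psi_Phi Psi s (swp i j y) n0.
have Ev : vfrac R (swp i j y) = vfrac R y.
  by rewrite /vfrac -(reindex_tperm i j); congr (_ * _); apply: eq_bigr => k _;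
    rewrite ffunE tpermK.
rewrite Ev in E2 V2; rewrite E1 E2; apply: mon => //; try exact: vfrac_in01.
have D : TPhat R s y - TPhat R s (swp i j y) = (n%:R)^-1.
  rewrite /TPhat -mulrBr -sumrB (bigD1 i) //= big1 ?addr0 => [| k ki].
    by rewrite ffunE tpermL si yi (negbTE yj) /= subr0 mulr1.
  rewrite ffunE; case: (eqVneq k j) => [->|kj].
    by rewrite (negbTE sj) /= subrr.
  by rewrite tpermD 1?eq_sym // subrr.
by rewrite -subr_gt0 D invr_gt0 ltr0n.
Qed.

Theorem theorem1 (R : realFieldType) (n : nat) (Psi : metric R) :
  (0 < n)%N ->
  metric_nonneg Psi ->
  TP_monotonic Psi ->
  forall (eta : 'I_n -> R), (forall i, 0 <= eta i <= 1) ->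
  forall s_star : {ffun 'I_n -> bool},
    (forall s : {ffun 'I_n -> bool}, utility Psi eta s <= utility Psi eta s_star) ->
    (* min{eta_i : s*_i = 1} >= max{eta_j : s*_j = 0} *)
    forall i j : 'I_n, s_star i -> ~~ s_star j -> eta j <= eta i.
Proof.
move=> n0 _ mon eta heta s hmax i j si sj.
have ij : i != j by apply/eqP => e; move: sj; rewrite -e si.
rewrite leNgt; apply/negP => lt_ij.
have := hmax (swp i j s); apply/negP; rewrite -ltNge -subr_gt0.
set P := label_prob eta.
set g := fun y => (P (swp i j y) - P y) * Psi_eval Psi s y.
have D : utility Psi eta (swp i j s) - utility Psi eta s = \sum_y g y.
  rewrite /utility (eq_bigr (fun y => P y * Psi_eval Psi s (swp i j y)));
    last by move=> y _; rewrite Psi_eval_swap.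
  rewrite (reindex_inj (@swp_inj _ i j)) /=.
  rewrite -sumrB; apply: eq_bigr => y _; rewrite swpK /g mulrBl //.
rewrite D (bigID (fun y : {ffun 'I_n -> bool} => y i && ~~ y j)) /=.
rewrite [X in _ + X](bigID (fun y : {ffun 'I_n -> bool} => ~~ y i && y j)) /=.
rewrite [X in _ + (_ + X)]big1 ?addr0; last first.
  move=> y /andP[h1 h2]; rewrite /g.
  have -> : swp i j y = y.
    apply/ffunP => k; rewrite ffunE; case: tpermP => [->|->|//];
      by move: h1 h2; case: (y i); case: (y j).
  by rewrite subrr mul0r.
rewrite [X in _ + X](reindex_inj (@swp_inj _ i j)) /=.
rewrite [X in _ + X](eq_bigl (fun y : {ffun 'I_n -> bool} => y i && ~~ y j)); last first.
  move=> y; rewrite !ffunE tpermL tpermR.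
  by case: (y i); case: (y j).
rewrite -big_split /=.
set h := fun y => g y + g (swp i j y).
have hE : forall y : {ffun 'I_n -> bool}, y i -> ~~ y j ->
    h y = (eta j - eta i) * Qp eta i j y *
          (Psi_eval Psi s y - Psi_eval Psi s (swp i j y)).
  move=> y yi yj; rewrite /h /g swpK /P !(P_split eta _ ij) Qp_swp !ffunE
    tpermL tpermR yi (negbTE yj); ring.
have Qge : forall y : {ffun 'I_n -> bool}, 0 <= Qp eta i j y.
  move=> y; apply: prodr_ge0 => k _; case: (y k); have := heta k; lra.
have hge : forall y : {ffun 'I_n -> bool}, y i && ~~ y j -> 0 <= h y.
  move=> y /andP[yi yj]; rewrite hE // mulr_ge0 // ?mulr_ge0 //.
    by rewrite subr_ge0 ltW.
  by rewrite subr_ge0 ltW // Psi_strict.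
pose y0 : {ffun 'I_n -> bool} :=
  [ffun k => if k == i then true else if k == j then false else 0 < eta k].
have y0i : y0 i by rewrite ffunE eqxx.
have y0j : ~~ y0 j by rewrite ffunE eq_sym (negbTE ij) eqxx.
rewrite (bigD1 y0) /=; last by rewrite y0i.
have S0 : 0 <= \sum_(y : {ffun 'I_n -> bool} | (y i && ~~ y j) && (y != y0)) h y.
  by apply: sumr_ge0 => y /andP[hy _]; apply: hge.
have H0 : 0 < h y0.
  rewrite hE // mulr_gt0 // ?mulr_gt0 ?subr_gt0 //; last exact: Psi_strict.
  apply: prodr_gt0 => k /andP[ki kj]; rewrite ffunE (negbTE ki) (negbTE kj).
  case: ifP => //; have := heta k; move=> /andP[h0 h1] /negbT; rewrite -leNgt; lra.
move: S0 H0; rewrite /h /=; lra.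
Qed.
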